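(* Every Gibonacci sequence $\{G_n(a,b)\}$ (with $a,b\in\mathbb{Z}$, $\gcd(a,b)=1$) is complete mod $14$ (and hence also mod $2$ and mod $7$).
   Context: For integers $a,b$ with $\gcd(a,b)=1$, the Gibonacci sequence $\{G_n(a,b)\}_{n\ge1}$ is defined by $G_1=a$, $G_2=b$, $G_{n+1}=G_{n-1}+G_n$. A sequence is complete mod $m$ if every residue class modulo $m$ contains some term of the sequence. *)

(* Defs.v *)
From Stdlib Require Import ZArith.
Open Scope Z_scope.

(* gib a b k = G_{k+1}(a,b): gib a b 0 = a = G_1, gib a b 1 = b = G_2,
   and G_{n+1} = G_{n-1} + G_n. *)
Fixpoint gib_pair (a b : Z) (k : nat) : Z * Z :=
  match k with
  | O => (a, b)
  | S k' => let (x, y) := gib_pair a b k' in (y, x + y)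
  end.

(* G n a b = G_n(a,b) for n >= 1 (G 0 a b is an unused junk value). *)
Definition G (a b : Z) (n : nat) : Z := fst (gib_pair a b (Nat.pred n)).

Definition complete_mod (s : nat -> Z) (m : Z) : Prop :=
  forall r : Z, exists n : nat, (1 <= n)%nat /\ s n mod m = r mod m.

(* Main.v *)
Require Import Defs.
From Stdlib Require Import ZArith Lia List Bool.
Open Scope Z_scope.

Fixpoint gpm (x y : Z) (k : nat) : Z * Z :=
  match k with
  | O => (x, y)
  | S k' => let (u, v) := gpm x y k' in (v, (u + v) mod 14)
  end.

Lemma gpm_ok a b k :
  fst (gib_pair a b k) mod 14 = fst (gpm (a mod 14) (b mod 14) k) /\
  snd (gib_pair a b k) mod 14 = snd (gpm (a mod 14) (b mod 14) k).
Proof.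
  induction k as [|k [IH1 IH2]]; simpl; [split; reflexivity|].
  destruct (gib_pair a b k) as [x y]; destruct (gpm (a mod 14) (b mod 14) k) as [u v].
  simpl in *. split; [exact IH2|]. rewrite Zplus_mod, IH1, IH2. reflexivity.
Qed.

Definition zl : list Z := map Z.of_nat (seq 0 14).

Definition bad (x y : Z) : bool :=
  ((x mod 2 =? 0) && (y mod 2 =? 0)) || ((x mod 7 =? 0) && (y mod 7 =? 0)).

Definition covers (x y : Z) : bool :=
  forallb (fun r => existsb (fun k => fst (gpm x y k) =? r) (seq 0 48)) zl.

Definition allok : bool := forallb (fun x => forallb (fun y => bad x y || covers x y) zl) zl.

Lemma allok_true : allok = true.
Proof. vm_compute. reflexivity. Qed.

Lemma in_zl z : 0 <= z < 14 -> In z zl.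
Proof.
  intros H. unfold zl. apply in_map_iff. exists (Z.to_nat z). split.
  - apply Z2Nat.id; lia.
  - apply in_seq. lia.
Qed.


Lemma mod14_mod (x d : Z) : (d | 14) -> 0 < d -> (x mod 14) mod d = x mod d.
Proof.
  intros Hdiv Hd. apply Z.mod_mod_divide; exact Hdiv.
Qed.

Lemma c14 a b (hab : Z.gcd a b = 1) : complete_mod (G a b) 14.
Proof.
  intro r.
  assert (Hx := in_zl (a mod 14) ltac:(apply Z.mod_pos_bound; lia)).
  assert (Hy := in_zl (b mod 14) ltac:(apply Z.mod_pos_bound; lia)).
  assert (Hr := in_zl (r mod 14) ltac:(apply Z.mod_pos_bound; lia)).
  pose proof allok_true as H. unfold allok in H.
  rewrite forallb_forall in H. specialize (H _ Hx).
  rewrite forallb_forall in H. specialize (H _ Hy).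
  apply orb_prop in H. destruct H as [H|H].
  - exfalso. unfold bad in H.
    rewrite (mod14_mod a 2), (mod14_mod b 2), (mod14_mod a 7), (mod14_mod b 7) in H;
      try (exists 7; reflexivity); try (exists 2; reflexivity); try lia.
    apply orb_prop in H. destruct H as [H|H]; apply andb_prop in H; destruct H as [H1 H2];
      apply Z.eqb_eq in H1; apply Z.eqb_eq in H2.
    + assert (D : (2 | Z.gcd a b)) by
        (apply Z.gcd_greatest; apply Z.mod_divide; lia).
      rewrite hab in D. destruct D as [q Hq]; lia.
    + assert (D : (7 | Z.gcd a b)) by
        (apply Z.gcd_greatest; apply Z.mod_divide; lia).
      rewrite hab in D. destruct D as [q Hq]; lia.
  - unfold covers in H. rewrite forallb_forall in H. specialize (H _ Hr).
    apply existsb_exists in H. destruct H as [k [_ Hk]].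
    apply Z.eqb_eq in Hk. exists (S k). split; [lia|].
    unfold G. simpl Nat.pred. destruct (gpm_ok a b k) as [E _]. rewrite E. exact Hk.
Qed.

Lemma csub a b d (hab : Z.gcd a b = 1) : (d | 14) -> 0 < d -> complete_mod (G a b) d.
Proof.
  intros Hd Hp r. destruct (c14 a b hab r) as [n [Hn E]]. exists n. split; auto.
  rewrite <- (mod14_mod (G a b n) d), <- (mod14_mod r d) by auto. rewrite E. reflexivity.
Qed.

Theorem mainTheorem13 (a b : Z) (hab : Z.gcd a b = 1) :
  complete_mod (G a b) 14 /\ complete_mod (G a b) 2 /\ complete_mod (G a b) 7.
Proof.
  split; [apply c14; auto|]. split; apply csub; auto; try lia.
  - exists 7; reflexivity.
  - exists 2; reflexivity.
Qed.
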